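(* Let $m\ge1$ and let $\phi$ be the automorphism of the free group $F_{2m}$ with basis $A_1,\dots,A_m,B_1,\dots,B_m$ defined by $\phi(A_i)=(A_1\cdots A_{i-1})A_i(A_1\cdots A_{i-1})^{-1}$ for $1\le i\le m$ and $\phi(B_j)=A_1A_2\cdots A_m(B_1B_2\cdots B_j)\overline{A}_{j-1}\overline{A}_{j-2}\cdots\overline{A}_1$ for $1\le j\le m$ (so $\phi(A_1)=A_1$ and $\phi(B_1)=A_1\cdots A_mB_1$). Then for all integers $n\ge1$ and $1\le k\le m$, $\phi^n(B_k)=A_1^n\cdots A_m^n\,u_{k,n}\,B_k\,\overline{A}_{k-1}^{\,n}\cdots\overline{A}_1^{\,n}$ in $F_{2m}$, where $u_{k,n}$ is a positive word.
   Context: A bar denotes the inverse of an element: $\overline{A}_i=A_i^{-1}$. A positive word is a word in the letters $A_1,\dots,A_m,B_1,\dots,B_m$ containing no inverse letters (the empty word is allowed). *)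

(* Defs.v *)
From mathcomp Require Import all_boot.
Set Implicit Arguments. Unset Strict Implicit. Unset Printing Implicit Defensive.

(* A generator: (false, i) = A_i, (true, j) = B_j  (indices 1..m). *)
Definition gen := (bool * nat)%type.
Definition genA (i : nat) : gen := (false, i).
Definition genB (j : nat) : gen := (true, j).

(* A letter: a generator together with an exponent flag
   (false = the generator itself, true = its inverse, written with a bar). *)
Definition letter := (gen * bool)%type.
Definition word := seq letter.

Definition letA (i : nat) : letter := (genA i, false).
Definition letAbar (i : nat) : letter := (genA i, true).
Definition letB (j : nat) : letter := (genB j, false).

Definition inv_letter (x : letter) : letter := (x.1, ~~ x.2).
Definition inv_word (w : word) : word := rev (map inv_letter w).

Definition push (x : letter) (w : word) : word :=
  match w with
  | y :: w' => if y == inv_letter x then w' else x :: w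
  | [::] => [:: x]
  end.
Definition reduce (w : word) : word := foldr push [::] w.

Definition feq (u v : word) : Prop := reduce u = reduce v.

Definition Aprefix (j : nat) : word := map letA (iota 1 j).
Definition Bprefix (j : nat) : word := map letB (iota 1 j).

Definition phi_gen (m : nat) (g : gen) : word :=
  match g with
  | (false, i) => Aprefix i.-1 ++ [:: letA i] ++ inv_word (Aprefix i.-1)
  | (true, j) => Aprefix m ++ Bprefix j ++ inv_word (Aprefix j.-1)
  end.

Definition phi_letter (m : nat) (x : letter) : word :=
  if x.2 then inv_word (phi_gen m x.1) else phi_gen m x.1.

Definition phi (m : nat) (w : word) : word := flatten (map (phi_letter m) w).

Definition positive_word (m : nat) (u : word) : bool :=
  all (fun x : letter => ~~ x.2 && (1 <= x.1.2 <= m)) u.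

Definition Apows (m n : nat) : word :=
  flatten (map (fun i => nseq n (letA i)) (iota 1 m)).
Definition Abarpows (k n : nat) : word :=
  flatten (map (fun i => nseq n (letAbar i)) (rev (iota 1 k.-1))).

(* Main.v *)
Require Import Defs.
From mathcomp Require Import all_boot.
From Stdlib Require Import Setoid Morphisms Lia.
From mathcomp Require Import zify.

Lemma inv_letterK : involutive inv_letter.
Proof. by case=> g b; rewrite /inv_letter /= negbK. Qed.

Fixpoint reducedb (w : word) : bool :=
  match w with
  | x :: ((y :: _) as w') => (y != inv_letter x) && reducedb w'
  | _ => true
  end.

Lemma reducedb_tail x w : reducedb (x :: w) -> reducedb w.
Proof. by case: w => [|y w] //= /andP[]. Qed.

Lemma push_reduced x w : reducedb w -> reducedb (push x w).
Proof.
case: w => [|y w] //= H.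
case: eqP => [_|/eqP ne]; first exact: reducedb_tail H.
by rewrite /= ne.
Qed.

Lemma foldr_reduced t w : reducedb t -> reducedb (foldr push t w).
Proof. by move=> Ht; elim: w => //= x w IH; apply: push_reduced. Qed.

Lemma pushK x s : reducedb s -> push x (push (inv_letter x) s) = s.
Proof.
case: s => [|z s] /=; first by rewrite eqxx.
rewrite inv_letterK; case: eqP => [-> | ne] Hs.
  case: s Hs => [|y s] //= /andP[Hy _]; by rewrite (negbTE Hy).
by rewrite /= eqxx.
Qed.

Lemma foldr_push t x w : reducedb t ->
  foldr push t (push x w) = push x (foldr push t w).
Proof.
move=> Ht; case: w => [|y w] //=.
case: eqP => [-> | _] //=.
by rewrite pushK // foldr_reduced.
Qed.

Lemma foldr_reduce t u : reducedb t -> foldr push t (reduce u) = foldr push t u.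
Proof.
move=> Ht; elim: u => //= x u IH.
by rewrite foldr_push // IH.
Qed.

Lemma reduce_cat u v : reduce (u ++ v) = foldr push (reduce v) u.
Proof. by rewrite /reduce foldr_cat. Qed.

Lemma feq_cat u u' v v' : feq u u' -> feq v v' -> feq (u ++ v) (u' ++ v').
Proof.
rewrite /feq !reduce_cat => Hu Hv.
rewrite -(foldr_reduce _ u); last exact: foldr_reduced.
by rewrite Hu Hv foldr_reduce //; apply: foldr_reduced.
Qed.

#[global] Instance feq_equiv : Equivalence feq.
Proof. split; rewrite /feq; congruence. Qed.

#[global] Instance cat_proper : Proper (feq ==> feq ==> feq) (@cat letter).
Proof. by move=> u u' Hu v v' Hv; apply: feq_cat. Qed.

Lemma feq_cancel x w : feq (x :: inv_letter x :: w) w.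
Proof. by rewrite /feq /= pushK //; apply: foldr_reduced. Qed.

Lemma inv_word_cat u v : inv_word (u ++ v) = inv_word v ++ inv_word u.
Proof. by rewrite /inv_word map_cat rev_cat. Qed.

Lemma inv_wordK : involutive inv_word.
Proof. by move=> w; rewrite /inv_word map_rev revK -map_comp map_id_in // => x _ /=; rewrite inv_letterK. Qed.

Lemma inv_word_cons x w : inv_word (x :: w) = inv_word w ++ [:: inv_letter x].
Proof. by rewrite /inv_word /= rev_cons cats1. Qed.

Lemma cat_inv w : feq (w ++ inv_word w) [::].
Proof.
elim: w => [|x w IH] //=.
rewrite inv_word_cons catA.
have -> : x :: (w ++ inv_word w) ++ [:: inv_letter x] = [:: x] ++ ((w ++ inv_word w) ++ [:: inv_letter x]) by [].
setoid_rewrite IH; apply: (feq_cancel x [::]).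
Qed.

Lemma inv_cat w : feq (inv_word w ++ w) [::].
Proof. by have := cat_inv (inv_word w); rewrite inv_wordK. Qed.

#[global] Instance inv_proper : Proper (feq ==> feq) inv_word.
Proof.
move=> u v H.
transitivity (inv_word u ++ (v ++ inv_word v)); first by setoid_rewrite cat_inv; rewrite cats0.
transitivity (inv_word u ++ (u ++ inv_word v)).
  by apply: feq_cat; [reflexivity | apply: feq_cat; [symmetry; exact: H | reflexivity]].
rewrite catA; setoid_rewrite inv_cat; reflexivity.
Qed.
Lemma phi_cat m u v : phi m (u ++ v) = phi m u ++ phi m v.
Proof. by rewrite /phi map_cat flatten_cat. Qed.

Lemma phi_cons m x w : phi m (x :: w) = phi_letter m x ++ phi m w.
Proof. by []. Qed.

Lemma phi_letter_inv m x : phi_letter m (inv_letter x) = inv_word (phi_letter m x).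
Proof. by case: x => g [] //=; rewrite /phi_letter /= inv_wordK. Qed.

Lemma phi_inv m w : phi m (inv_word w) = inv_word (phi m w).
Proof.
elim: w => [|x w IH] //.
by rewrite inv_word_cons phi_cat IH phi_cons inv_word_cat /= cats0 phi_letter_inv.
Qed.

Lemma phi_push m x w : feq (phi m (push x w)) (phi m (x :: w)).
Proof.
case: w => [|y w] //=.
case: eqP => [-> | _] //=.
rewrite /phi /= -/(phi m w) catA phi_letter_inv.
setoid_rewrite cat_inv; reflexivity.
Qed.

Lemma phi_reduce m w : feq (phi m (reduce w)) (phi m w).
Proof.
elim: w => [|x w IH] //=.
setoid_rewrite phi_push; rewrite !phi_cons; setoid_rewrite IH; reflexivity.
Qed.

#[global] Instance phi_proper m : Proper (feq ==> feq) (phi m).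
Proof.
move=> u v H; setoid_rewrite <- phi_reduce.
have -> : reduce u = reduce v by exact: H.
reflexivity.
Qed.

#[global] Instance cons_proper x : Proper (feq ==> feq) (cons x).
Proof. by move=> u v H; apply: (feq_cat [:: x] [:: x] u v). Qed.
Definition T (m l : nat) : word := map letA (iota l (m.+1 - l)).
Definition conj (m : nat) (w : word) : word := inv_word (Aprefix m) ++ phi m w ++ Aprefix m.

Lemma canc_ft g w : feq ((g, false) :: (g, true) :: w) w.
Proof. exact: (feq_cancel (g, false)). Qed.
Lemma canc_tf g w : feq ((g, true) :: (g, false) :: w) w.
Proof. exact: (feq_cancel (g, true)). Qed.
Lemma canc0 w v : feq (w ++ inv_word w ++ v) v.
Proof. rewrite catA; setoid_rewrite cat_inv; reflexivity. Qed.
Lemma canc1 w v : feq (inv_word w ++ w ++ v) v.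
Proof. rewrite catA; setoid_rewrite inv_cat; reflexivity. Qed.

Lemma Psplit m j : 1 <= j <= m.+1 -> Aprefix m = Aprefix j.-1 ++ T m j.
Proof.
case/andP=> h1 h2; rewrite /Aprefix /T -map_cat; congr map.
have {1}-> : m = j.-1 + (m.+1 - j) by case: j h1 h2 => // j _ h2 /=; rewrite subSS subnKC.
by rewrite iotaD add1n prednK.
Qed.

Lemma TS m j : j <= m -> T m j = letA j :: T m j.+1.
Proof. by move=> h; rewrite /T subSS subSn. Qed.

Lemma Tsplit m l i : l <= i.+1 -> i <= m ->
  T m l = map letA (iota l (i.+1 - l)) ++ T m i.+1.
Proof.
move=> h1 h2; rewrite /T -map_cat; congr map.
have {1}-> : m.+1 - l = (i.+1 - l) + (m.+1 - i.+1).
  by lia.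
by rewrite iotaD subnKC.
Qed.

Lemma conj_cat m u v : feq (conj m (u ++ v)) (conj m u ++ conj m v).
Proof.
rewrite /conj phi_cat -!catA; setoid_rewrite canc0; reflexivity.
Qed.

Lemma conj_nil m : feq (conj m [::]) [::].
Proof. rewrite /conj /=; setoid_rewrite inv_cat; reflexivity. Qed.

Lemma conjA m i : 1 <= i <= m ->
  feq (conj m [:: letA i]) (inv_word (T m i.+1) ++ letA i :: T m i.+1).
Proof.
case/andP=> h1 h2.
have hP : 1 <= i <= m.+1 by rewrite h1 ltnW.
rewrite /conj (Psplit m i hP) (TS m i h2).
rewrite /phi /= cats0 /phi_letter /= inv_word_cat inv_word_cons -!catA.
setoid_rewrite canc1. rewrite !cat_cons !cat0s. setoid_rewrite canc1.
setoid_rewrite canc_tf. reflexivity.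
Qed.

Fixpoint okA (m l : nat) (s : seq nat) : bool :=
  match s with
  | [::] => true
  | i :: s' => [&& l <= i.+1, 1 <= i, i <= m & okA m i.+1 s']
  end.

Lemma okA_iota m l n r : 1 <= l -> l + n <= m.+1 -> okA m (l + n) r ->
  okA m l (iota l n ++ r).
Proof.
elim: n l => [|n IH] l h1 h2 h3 /=; first by rewrite addn0 in h3.
rewrite leqnSn h1 /=; apply/andP; split; first by lia.
apply: IH => //; by rewrite addSnnS.
Qed.

Lemma state m s l : 1 <= l <= m.+1 -> okA m l s ->
  exists o, okA m l o /\ feq (T m l ++ conj m (map letA s)) (map letA o).
Proof.
elim: s l => [|i s IH] l /andP[hl1 hl2] /=.
  move=> _; exists (iota l (m.+1 - l)); split.
    by rewrite -[iota _ _]cats0 okA_iota // subnKC.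
  setoid_rewrite conj_nil; rewrite cats0; reflexivity.
case/and4P=> hli hi1 him hok.
have [|o [ho Ho]] := IH i.+1 _ hok; first by apply/andP; split; lia.
exists (iota l (i.+1 - l) ++ i :: o); split.
  apply: okA_iota => //; try rewrite subnKC //; try lia.
  by rewrite /= leqnn hi1 him.
rewrite -cat1s; setoid_rewrite conj_cat; setoid_rewrite conjA; last by rewrite hi1.
rewrite (Tsplit m l i) // map_cat -!catA; setoid_rewrite canc0.
rewrite cat_cons; setoid_rewrite Ho; reflexivity.
Qed.

Definition block (j : nat) (s : seq nat) : word := letB j :: map letA s.
Definition wof (bs : seq (nat * seq nat)) : word :=
  flatten (map (fun b => block b.1 b.2) bs).
Definition gb (m : nat) (bs : seq (nat * seq nat)) : bool :=
  all (fun b => (1 <= b.1 <= m) && okA m b.1 b.2) bs.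

Lemma wof_cat a b : wof (a ++ b) = wof a ++ wof b.
Proof. by rewrite /wof map_cat flatten_cat. Qed.

Lemma Bprefix_wof j : Bprefix j = wof (map (fun i => (i, [::])) (iota 1 j)).
Proof.
rewrite /Bprefix /wof; elim: j 1 => [|j IH] k //=.
by rewrite IH.
Qed.

Lemma BprefixS j : 1 <= j -> Bprefix j = Bprefix j.-1 ++ [:: letB j].
Proof.
case: j => // j _; rewrite /Bprefix -(addn1 j) iotaD map_cat /=.
by rewrite add1n addn1.
Qed.

Lemma block_conj m j s : 1 <= j <= m -> okA m j s ->
  exists o, okA m j o /\ feq (conj m (block j s)) (Bprefix j ++ map letA o).
Proof.
move=> /andP[hj1 hj2] hs.
have [|o [ho Ho]] := state m s j _ hs; first by apply/andP; split; lia.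
exists o; split => //.
rewrite /block -cat1s; setoid_rewrite conj_cat.
rewrite {1}/conj /phi /= cats0 /phi_letter /=.
rewrite -!catA; setoid_rewrite canc1.
rewrite (Psplit m j); last by apply/andP; split; lia.
rewrite -!catA; setoid_rewrite canc1; setoid_rewrite Ho; reflexivity.
Qed.

Lemma good_conj m bs : gb m bs ->
  exists bs', gb m bs' /\ feq (conj m (wof bs)) (wof bs').
Proof.
elim: bs => [|[j s] bs IH] /=.
  move=> _; exists [::]; split => //; exact: conj_nil.
case/andP=> /andP[hj hs] /IH [bs' [hbs' Hbs']].
have [o [ho Ho]] := block_conj m j s hj hs.
exists (map (fun i => (i, [::])) (iota 1 j.-1) ++ (j, o) :: bs'); split.
  rewrite /gb all_cat /= hj ho /=; apply/andP; split; last exact: hbs'.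
  apply/allP => b /mapP [i]; rewrite mem_iota => hi -> /=.
  rewrite andbT; apply/andP; split; lia.
rewrite -cat1s; setoid_rewrite conj_cat.
setoid_rewrite Ho; setoid_rewrite Hbs'.
rewrite wof_cat -Bprefix_wof (BprefixS j); last by case/andP: hj.
rewrite -!catA; reflexivity.
Qed.

Lemma okA_range m l s : okA m l s -> all (fun i => 1 <= i <= m) s.
Proof.
elim: s l => //= i s IH l /and4P[_ h1 h2 h3].
by rewrite h1 h2 (IH _ h3).
Qed.

Lemma good_pos m bs : gb m bs -> positive_word m (wof bs).
Proof.
rewrite /positive_word; elim: bs => [|[j s] bs IH] //= /andP[/andP[hj hs] hbs].
rewrite all_cat IH // andbT /= hj /= all_map.
apply/allP => i /(allP (okA_range m j s hs)) /= ->; by [].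
Qed.

Definition R (j n : nat) : word := flatten (map (fun i => nseq n (letA i)) (iota 1 j)).

Lemma R0 j : R j 0 = [::].
Proof. by rewrite /R; elim: (iota 1 j) => //= ? ? ->. Qed.

Lemma RS j n : R j.+1 n = R j n ++ nseq n (letA j.+1).
Proof.
by rewrite /R -(addn1 j) iotaD map_cat flatten_cat /= cats0 add1n addn1.
Qed.

Lemma AprefixS j : Aprefix j.+1 = Aprefix j ++ [:: letA j.+1].
Proof. by rewrite /Aprefix -(addn1 j) iotaD map_cat /= add1n addn1. Qed.

Lemma nseqSr (x : letter) n : nseq n.+1 x = nseq n x ++ [:: x].
Proof. by elim: n => //= n ->. Qed.

Lemma inv_flatten n s :
  inv_word (flatten (map (fun i => nseq n (letA i)) s)) =
  flatten (map (fun i => nseq n (letAbar i)) (rev s)).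
Proof.
elim: s => [|x s IH] //=.
rewrite inv_word_cat IH rev_cons map_rcons flatten_rcons; congr cat.
by rewrite /inv_word map_nseq rev_nseq.
Qed.

Lemma Abarpows_R k n : Abarpows k n = inv_word (R k.-1 n).
Proof. by rewrite /R inv_flatten. Qed.

Lemma phi_nseq m n i : feq (phi m (nseq n (letA i)))
  (Aprefix i.-1 ++ nseq n (letA i) ++ inv_word (Aprefix i.-1)).
Proof.
elim: n => [|n IH] /=.
  symmetry; exact: cat_inv.
rewrite phi_cons; setoid_rewrite IH.
rewrite /phi_letter /= -!catA cat_cons; setoid_rewrite canc1.
reflexivity.
Qed.

Lemma phiR m j n : feq (phi m (R j n)) (R j n.+1 ++ inv_word (Aprefix j)).
Proof.
elim: j => [|j IH]; first by [].
have -> : R j.+1 n.+1 ++ inv_word (Aprefix j.+1) = R j n.+1 ++ nseq n (letA j.+1)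
   ++ [:: letA j.+1; letAbar j.+1] ++ inv_word (Aprefix j).
  by rewrite RS AprefixS nseqSr inv_word_cat -!catA.
setoid_rewrite canc_ft.
rewrite RS phi_cat; setoid_rewrite IH; setoid_rewrite phi_nseq.
rewrite -!catA; setoid_rewrite canc1; reflexivity.
Qed.

Lemma mainclaim m k n : 1 <= k <= m ->
  exists bs, gb m bs /\ feq (iter n (phi m) [:: letB k])
     (R m n ++ wof bs ++ [:: letB k] ++ inv_word (R k.-1 n)).
Proof.
move=> hk; elim: n => [|n [bs [hbs IH]]].
  by exists [::]; rewrite !R0.
have [bs' [hbs' Hbs']] := good_conj m bs hbs.
exists (bs' ++ map (fun i => (i, [::])) (iota 1 k.-1)); split.
  rewrite /gb all_cat; apply/andP; split; first exact: hbs'.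
  apply/allP => b /mapP [i]; rewrite mem_iota => hi -> /=.
  rewrite andbT; apply/andP; split; lia.
have -> : iter n.+1 (phi m) [:: letB k] = phi m (iter n (phi m) [:: letB k]) by [].
setoid_rewrite IH.
rewrite !phi_cat phi_inv.
have -> : phi m [:: letB k] = Aprefix m ++ Bprefix k ++ inv_word (Aprefix k.-1).
  by rewrite /phi /= cats0.
setoid_rewrite (phiR m m n); setoid_rewrite (phiR m k.-1 n).
transitivity (R m n.+1 ++ conj m (wof bs) ++ Bprefix k ++ inv_word (R k.-1 n.+1)).
  rewrite /conj inv_word_cat inv_wordK -!catA; setoid_rewrite canc1; reflexivity.
setoid_rewrite Hbs'.
rewrite (BprefixS k); last by case/andP: hk.
rewrite wof_cat -Bprefix_wof -!catA; reflexivity.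
Qed.

Theorem lemma7p7 (m : nat) (hm : 1 <= m) (n k : nat) (hn : 1 <= n)
    (hk1 : 1 <= k) (hkm : k <= m) :
  exists u : word, positive_word m u /\
    feq (iter n (phi m) [:: letB k])
        (Apows m n ++ u ++ [:: letB k] ++ Abarpows k n).
Proof.
have [|bs [hbs H]] := mainclaim m k n; first by rewrite hk1 hkm.
exists (wof bs); split; first exact: good_pos.
by rewrite Abarpows_R.
Qed.
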